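(* Let $m, n$ be positive integers with $m \mid n$. Then $\mathcal{L}_n \subseteq \mathcal{L}_m$ and $\mathcal{M}_n \subseteq \mathcal{M}_m$. In particular, $\mathcal{L}_n \subseteq \mathcal{L}$ and $\mathcal{M}_n \subseteq \mathcal{M}$.
   Context: For an irrational real $\xi$ and positive integer $n$, $\lambda_n(\xi) = \limsup_{s/t \to \xi} \dfrac{\gcd(t,n)}{t^2 \left| \frac{s}{t} - \xi\right|}$ (limsup over rationals $s/t$, $t>0$, tending to $\xi$), and $\mathcal{L}_n = \{\lambda_n(\xi)\in\mathbb{R} : \xi\in\mathbb{R}\setminus\mathbb{Q}\}$. For reals $\xi\ne\xi'$, $\mu_n(\xi,\xi') = \sup_{(s,t)\in\mathbb{Z}^2\setminus\{0\}} \dfrac{\gcd(t,n)\,|\xi-\xi'|}{|s-t\xi|\,|s-t\xi'|}$ (with $\gcd(0,n)=n$), and $\mathcal{M}_n$ is the set of finite values of $\mu_n(\xi,\xi')$ over pairs of reals $\xi\neq\xi'$. The classical Lagrange and Markoff spectra are $\mathcal{L}=\mathcal{L}_1$ and $\mathcal{M}=\mathcal{M}_1$. *)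

(* Defs.v *)
From Stdlib Require Import Reals ZArith.
From Coquelicot Require Import Coquelicot.
Open Scope R_scope.

Definition irrational (x : R) : Prop :=
  ~ (exists p q : Z, q <> 0%Z /\ x = IZR p / IZR q).

Definition lag_term (n : nat) (xi : R) (s t : Z) : R :=
  IZR (Z.gcd t (Z.of_nat n)) / (IZR t ^ 2 * Rabs (IZR s / IZR t - xi)).

Definition lag_sup (n : nat) (xi : R) (delta : R) : Rbar :=
  Rbar_lub (fun y : Rbar => exists s t : Z, (0 < t)%Z /\
     0 < Rabs (IZR s / IZR t - xi) < delta /\ y = Finite (lag_term n xi s t)).

(* lambda_n(xi) = limsup_{s/t -> xi} gcd(t,n)/(t^2 |s/t - xi|)
   = inf_{delta > 0} sup_{0<|s/t-xi|<delta} ... , valued in [0,+oo] *)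
Definition lambda_n (n : nat) (xi : R) : Rbar :=
  Rbar_glb (fun y : Rbar => exists delta : R, 0 < delta /\ y = lag_sup n xi delta).

Definition Lspec (n : nat) (r : R) : Prop :=
  exists xi : R, irrational xi /\ lambda_n n xi = Finite r.

(* mu_n(xi,xi') = sup over (s,t) <> (0,0) of gcd(t,n)|xi-xi'|/(|s-t xi||s-t xi'|),
   with gcd(0,n) = n; a vanishing denominator gives +oo *)
Definition mark_term (n : nat) (xi xi' : R) (s t : Z) : Rbar :=
  let d := Rabs (IZR s - IZR t * xi) * Rabs (IZR s - IZR t * xi') in
  if Req_EM_T d 0 then p_infty
  else Finite (IZR (Z.gcd t (Z.of_nat n)) * Rabs (xi - xi') / d).

Definition mu_n (n : nat) (xi xi' : R) : Rbar :=
  Rbar_lub (fun y : Rbar => exists s t : Z, (s <> 0%Z \/ t <> 0%Z) /\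
     y = mark_term n xi xi' s t).

Definition Mspec (n : nat) (r : R) : Prop :=
  exists xi xi' : R, xi <> xi' /\ mu_n n xi xi' = Finite r.

(* Main.v *)
Require Import Defs.
From Stdlib Require Import Reals ZArith Lra Lia Psatz Classical.
From Coquelicot Require Import Coquelicot.
Open Scope R_scope.

Lemma glb_lower (E : Rbar -> Prop) x : E x -> Rbar_le (Rbar_glb E) x.
Proof. unfold Rbar_glb. destruct (Rbar_ex_glb E) as [l [H1 H2]]; simpl. auto. Qed.
Lemma glb_greatest (E : Rbar -> Prop) b : (forall x, E x -> Rbar_le b x) -> Rbar_le b (Rbar_glb E).
Proof. unfold Rbar_glb. destruct (Rbar_ex_glb E) as [l [H1 H2]]; simpl. auto. Qed.
Lemma lub_upper (E : Rbar -> Prop) x : E x -> Rbar_le x (Rbar_lub E).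
Proof. unfold Rbar_lub. destruct (Rbar_ex_lub E) as [l [H1 H2]]; simpl. auto. Qed.
Lemma lub_least (E : Rbar -> Prop) b : (forall x, E x -> Rbar_le x b) -> Rbar_le (Rbar_lub E) b.
Proof. unfold Rbar_lub. destruct (Rbar_ex_lub E) as [l [H1 H2]]; simpl. auto. Qed.

Lemma le_of_approx (r : R) (y : Rbar) :
  (forall r', r' < r -> Rbar_le (Finite r') y) -> Rbar_le (Finite r) y.
Proof.
  destruct y as [y| |]; simpl; intros H; auto.
  - apply Rnot_lt_le; intro Hl. specialize (H ((r + y)/2)). simpl in H. lra.
  - apply (H (r - 1)). lra.
Qed.

Lemma pick_g (n : Z) (r : R) (W : Z -> R -> R -> Prop)
  (Wmono : forall g d r' d2 r2, W g d r' -> d <= d2 -> r2 <= r' -> W g d2 r2)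
  (H : forall d, 0 < d -> forall r', r' < r -> exists g, (1 <= g <= n)%Z /\ W g d r') :
  exists g, (1 <= g <= n)%Z /\ forall d, 0 < d -> forall r', r' < r -> W g d r'.
Proof.
  destruct (classic (exists g, (1 <= g <= n)%Z /\ forall d, 0 < d -> forall r', r' < r -> W g d r')) as [Hy|Hno]; auto.
  exfalso.
  assert (Hk : forall k : nat, exists d r', 0 < d /\ r' < r /\
     forall g, (1 <= g <= Z.of_nat k)%Z -> (g <= n)%Z -> ~ W g d r').
  { induction k as [|k IH].
    - exists 1, (r - 1). repeat split; try lra. intros g Hg. lia.
    - destruct IH as [d [r' [Hd [Hr' HW]]]].
      destruct (Z_le_gt_dec (Z.of_nat (S k)) n) as [Hle|Hgt].
      + assert (Hex : exists d1 r1, 0 < d1 /\ r1 < r /\ ~ W (Z.of_nat (S k)) d1 r1).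
        { apply NNPP; intro Hc. apply Hno. exists (Z.of_nat (S k)). split; [lia|].
          intros d1 Hd1 r1 Hr1. apply NNPP; intro HW1. apply Hc. eauto. }
        destruct Hex as [d1 [r1 [Hd1 [Hr1 HW1]]]].
        exists (Rmin d d1), (Rmax r' r1). repeat split.
        * apply Rmin_glb_lt; auto.
        * apply Rmax_lub_lt; auto.
        * intros g Hg Hgn HWg.
          destruct (Z.eq_dec g (Z.of_nat (S k))) as [->|Hneq].
          -- apply HW1. eapply Wmono; [exact HWg| apply Rmin_r | apply Rmax_r].
          -- apply (HW g); [lia|auto|]. eapply Wmono; [exact HWg| apply Rmin_l | apply Rmax_l].
      + exists d, r'. repeat split; auto. intros g Hg Hgn. apply HW; lia. }
  destruct (Hk (Z.to_nat n)) as [d [r' [Hd [Hr' HW]]]].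
  destruct (H d Hd r' Hr') as [g [Hg HWg]].
  apply (HW g); [lia|lia|exact HWg].
Qed.

Lemma gcd_range (t N : Z) : (0 < N)%Z -> (1 <= Z.gcd t N <= N)%Z.
Proof.
  intros HN. pose proof (Z.gcd_nonneg t N).
  assert (Z.gcd t N <> 0%Z) by (rewrite Z.gcd_eq_0; lia).
  split; [lia|]. apply Z.divide_pos_le; auto. apply Z.gcd_divide_r.
Qed.

Lemma setup (m n g0 : Z) : (0 < m)%Z -> (0 < n)%Z -> (m | n)%Z -> (0 < g0)%Z -> (g0 | n)%Z ->
  exists c d, (0 < c)%Z /\ (0 < d)%Z /\ (d | m)%Z /\ (d * c = g0)%Z /\ (m * c | n)%Z.
Proof.
  intros Hm Hn Hmn Hg Hgn.
  set (d := Z.gcd m g0).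
  assert (Hd : (0 < d)%Z).
  { pose proof (Z.gcd_nonneg m g0). assert (d <> 0%Z) by (unfold d; rewrite Z.gcd_eq_0; lia). lia. }
  assert (Hdc : g0 = (d * (g0 / d))%Z).
  { apply Znumtheory.Zdivide_Zdiv_eq; auto. apply Z.gcd_divide_r. }
  exists (g0 / d)%Z, d. repeat split; auto.
  - revert Hdc Hg Hd; generalize (g0 / d)%Z; intros q Hq Hg Hd; nia.
  - apply Z.gcd_divide_l.
  - apply Z.divide_abs_l. change (Z.lcm m g0 | n)%Z. apply Z.lcm_least; auto.
Qed.

Lemma gcd_up (m n c t : Z) : (0 < c)%Z -> (0 < n)%Z -> (m * c | n)%Z ->
  (Z.gcd t m * c <= Z.gcd (t * c) n)%Z.
Proof.
  intros Hc Hn Hd.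
  assert (E : (Z.gcd (t * c) (m * c) = Z.gcd t m * c)%Z).
  { rewrite Z.gcd_mul_mono_r. rewrite Z.abs_eq; lia. }
  rewrite <- E. apply Z.divide_pos_le.
  - pose proof (gcd_range (t*c) n Hn). lia.
  - apply Z.gcd_greatest. apply Z.gcd_divide_l.
    eapply Z.divide_trans; [apply Z.gcd_divide_r|exact Hd].
Qed.

Lemma gcd_low (m n c d t : Z) : (0 < c)%Z -> (0 < m)%Z -> (0 < d)%Z -> (d | m)%Z ->
  Z.gcd t n = (d * c)%Z ->
  exists t'', t = (t'' * c)%Z /\ (Z.gcd t n <= Z.gcd t'' m * c)%Z.
Proof.
  intros Hc Hm Hd Hdm Hg.
  destruct (Z.gcd_divide_l t n) as [k Hk]. rewrite Hg in Hk.
  exists (k * d)%Z. split; [lia|].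
  rewrite Hg. apply Z.mul_le_mono_pos_r; auto.
  apply Z.divide_pos_le.
  - pose proof (gcd_range (k*d) m Hm). lia.
  - apply Z.gcd_greatest; auto. exists k; lia.
Qed.
Lemma dist_id (S T C x : R) : T <> 0 -> 0 < C ->
  Rabs (S / T - C * x) = C * Rabs (S / (T * C) - x).
Proof.
  intros HT HC. replace (S / T - C * x) with (C * (S / (T * C) - x)) by (field; lra).
  rewrite Rabs_mult, (Rabs_pos_eq C); lra.
Qed.

Lemma lag_cmp (n m : nat) (x : R) (s t c : Z) : (0 < c)%Z -> (t <> 0)%Z ->
  0 < Rabs (IZR s / (IZR t * IZR c) - x) ->
  IZR (Z.gcd t (Z.of_nat m)) * IZR c <= IZR (Z.gcd (t * c) (Z.of_nat n)) ->
  lag_term m (IZR c * x) s t <= lag_term n x s (t * c).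
Proof.
  intros Hc Ht Ha Hg. unfold lag_term. rewrite mult_IZR.
  assert (HC : 0 < IZR c) by (apply IZR_lt; lia).
  assert (HT : IZR t <> 0) by (apply not_0_IZR; lia).
  rewrite (dist_id _ _ _ _ HT HC).
  set (a := Rabs (IZR s / (IZR t * IZR c) - x)) in *.
  set (G1 := IZR (Z.gcd t (Z.of_nat m))) in *.
  set (G2 := IZR (Z.gcd (t * c) (Z.of_nat n))) in *.
  assert (HT2 : 0 < IZR t ^ 2) by (apply pow2_gt_0; auto).
  replace (G1 / (IZR t ^ 2 * (IZR c * a))) with ((G1 * IZR c) * / ((IZR t * IZR c) ^ 2 * a))
    by (field; repeat split; lra).
  unfold Rdiv. apply Rmult_le_compat_r; auto.
  left. apply Rinv_0_lt_compat. apply Rmult_lt_0_compat; auto.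
  apply pow2_gt_0. nra.
Qed.

Lemma lag_cmp2 (n m : nat) (x : R) (s t c : Z) : (0 < c)%Z -> (t <> 0)%Z ->
  0 < Rabs (IZR s / (IZR t * IZR c) - x) ->
  IZR (Z.gcd (t * c) (Z.of_nat n)) <= IZR (Z.gcd t (Z.of_nat m)) * IZR c ->
  lag_term n x s (t * c) <= lag_term m (IZR c * x) s t.
Proof.
  intros Hc Ht Ha Hg. unfold lag_term. rewrite mult_IZR.
  assert (HC : 0 < IZR c) by (apply IZR_lt; lia).
  assert (HT : IZR t <> 0) by (apply not_0_IZR; lia).
  rewrite (dist_id _ _ _ _ HT HC).
  set (a := Rabs (IZR s / (IZR t * IZR c) - x)) in *.
  set (G1 := IZR (Z.gcd t (Z.of_nat m))) in *.
  set (G2 := IZR (Z.gcd (t * c) (Z.of_nat n))) in *.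
  assert (HT2 : 0 < IZR t ^ 2) by (apply pow2_gt_0; auto).
  replace (G1 / (IZR t ^ 2 * (IZR c * a))) with ((G1 * IZR c) * / ((IZR t * IZR c) ^ 2 * a))
    by (field; repeat split; lra).
  unfold Rdiv. apply Rmult_le_compat_r; auto.
  left. apply Rinv_0_lt_compat. apply Rmult_lt_0_compat; auto.
  apply pow2_gt_0. nra.
Qed.

Lemma mark_cmp (n m : nat) (x x' : R) (s t c : Z) : (0 < c)%Z ->
  IZR (Z.gcd t (Z.of_nat m)) * IZR c <= IZR (Z.gcd (t * c) (Z.of_nat n)) ->
  Rbar_le (mark_term m (IZR c * x) (IZR c * x') s t) (mark_term n x x' s (t * c)).
Proof.
  intros Hc Hg. unfold mark_term. cbv zeta. rewrite mult_IZR.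
  assert (HC : 0 < IZR c) by (apply IZR_lt; lia).
  replace (IZR t * (IZR c * x)) with (IZR t * IZR c * x) by ring.
  replace (IZR t * (IZR c * x')) with (IZR t * IZR c * x') by ring.
  destruct (Req_EM_T _ 0) as [E|E]; simpl; auto.
  set (D := Rabs (IZR s - IZR t * IZR c * x) * Rabs (IZR s - IZR t * IZR c * x')) in *.
  assert (HD : 0 < D).
  { assert (0 <= D) by (unfold D; apply Rmult_le_pos; apply Rabs_pos). lra. }
  replace (IZR c * x - IZR c * x') with (IZR c * (x - x')) by ring.
  rewrite Rabs_mult, (Rabs_pos_eq (IZR c)) by lra.
  unfold Rdiv. apply Rmult_le_compat_r; [left; apply Rinv_0_lt_compat; auto|].
  pose proof (Rabs_pos (x - x')). nra.
Qed.

Lemma mark_cmp2 (n m : nat) (x x' : R) (s t c : Z) : (0 < c)%Z ->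
  IZR (Z.gcd (t * c) (Z.of_nat n)) <= IZR (Z.gcd t (Z.of_nat m)) * IZR c ->
  Rbar_le (mark_term n x x' s (t * c)) (mark_term m (IZR c * x) (IZR c * x') s t).
Proof.
  intros Hc Hg. unfold mark_term. cbv zeta. rewrite mult_IZR.
  assert (HC : 0 < IZR c) by (apply IZR_lt; lia).
  replace (IZR t * (IZR c * x)) with (IZR t * IZR c * x) by ring.
  replace (IZR t * (IZR c * x')) with (IZR t * IZR c * x') by ring.
  destruct (Req_EM_T _ 0) as [E|E]; simpl; auto.
  set (D := Rabs (IZR s - IZR t * IZR c * x) * Rabs (IZR s - IZR t * IZR c * x')) in *.
  assert (HD : 0 < D).
  { assert (0 <= D) by (unfold D; apply Rmult_le_pos; apply Rabs_pos). lra. }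
  replace (IZR c * x - IZR c * x') with (IZR c * (x - x')) by ring.
  rewrite Rabs_mult, (Rabs_pos_eq (IZR c)) by lra.
  unfold Rdiv. apply Rmult_le_compat_r; [left; apply Rinv_0_lt_compat; auto|].
  pose proof (Rabs_pos (x - x')). nra.
Qed.
Lemma natdiv_Z (m n : nat) : Nat.divide m n -> (Z.of_nat m | Z.of_nat n)%Z.
Proof. intros [k ->]. exists (Z.of_nat k). apply Nat2Z.inj_mul. Qed.

Lemma irr_scale (c : Z) (x : R) : (0 < c)%Z -> irrational x -> irrational (IZR c * x).
Proof.
  intros Hc Hx [p [q [Hq E]]]. apply Hx. exists p, (c * q)%Z. split; [lia|].
  rewrite mult_IZR. assert (IZR c <> 0) by (apply not_0_IZR; lia).
  assert (IZR q <> 0) by (apply not_0_IZR; lia).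
  apply (Rmult_eq_reg_l (IZR c)); auto. rewrite E. field. auto.
Qed.

Lemma L_incl (m n : nat) : (0 < m)%nat -> (0 < n)%nat -> Nat.divide m n ->
  forall r, Lspec n r -> Lspec m r.
Proof.
  intros Hm Hn Hmn r [x [Hirr Hl]].
  set (N := Z.of_nat n). set (M := Z.of_nat m).
  assert (HN : (0 < N)%Z) by (unfold N; lia).
  assert (HM : (0 < M)%Z) by (unfold M; lia).
  assert (HMN : (M | N)%Z) by (apply natdiv_Z; auto).
  assert (Hn' : forall d, 0 < d -> forall r', r' < r -> exists s t, (0 < t)%Z /\
      0 < Rabs (IZR s / IZR t - x) < d /\ r' < lag_term n x s t).
  { intros d Hd r' Hr'. apply NNPP; intro Hc.
    assert (H1 : Rbar_le (Finite r) (lag_sup n x d)).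
    { rewrite <- Hl. apply glb_lower. exists d; auto. }
    assert (H2 : Rbar_le (lag_sup n x d) (Finite r')).
    { apply lub_least. intros y [s [t [Ht [Hdist ->]]]]. simpl.
      apply Rnot_lt_le; intro. apply Hc; eauto. }
    pose proof (Rbar_le_trans _ _ _ H1 H2). simpl in *. lra. }
  set (W := fun g d r' => exists s t, (0 < t)%Z /\ Z.gcd t N = g /\
      0 < Rabs (IZR s / IZR t - x) < d /\ r' < lag_term n x s t).
  destruct (pick_g N r W) as [g0 [Hg0 Pg0]].
  { intros g d r' d2 r2 [s [t [H1 [H2 [H3 H4]]]]] Hd Hr. exists s, t. repeat split; auto; lra. }
  { intros d Hd r' Hr'. destruct (Hn' d Hd r' Hr') as [s [t [Ht [Hd' Hl']]]].
    exists (Z.gcd t N). split; [apply gcd_range; auto|]. exists s, t; auto. }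
  assert (Hg0n : (g0 | N)%Z).
  { destruct (Pg0 1 Rlt_0_1 (r - 1) ltac:(lra)) as [s [t [_ [Hg _]]]]. rewrite <- Hg.
    apply Z.gcd_divide_r. }
  destruct (setup M N g0 HM HN HMN ltac:(lia) Hg0n) as [c [d [Hc [Hd [HdM [Hdc HMc]]]]]].
  assert (HC : 0 < IZR c) by (apply IZR_lt; lia).
  exists (IZR c * x). split; [apply irr_scale; auto|].
  apply Rbar_le_antisym.
  - rewrite <- Hl. apply glb_greatest. intros y [de [Hde ->]].
    apply Rbar_le_trans with (lag_sup m (IZR c * x) (IZR c * de)).
    { apply glb_lower. exists (IZR c * de). split; auto. apply Rmult_lt_0_compat; auto. }
    apply lub_least. intros y [s [t [Ht [Hdist ->]]]].
    assert (HT : IZR t <> 0) by (apply not_0_IZR; lia).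
    rewrite (dist_id _ _ _ _ HT HC) in Hdist.
    assert (Ha : 0 < Rabs (IZR s / (IZR t * IZR c) - x) < de).
    { destruct Hdist as [Hd1 Hd2]. split.
      - apply Rmult_lt_reg_l with (IZR c); auto. lra.
      - apply Rmult_lt_reg_l with (IZR c); auto. }
    apply Rbar_le_trans with (Finite (lag_term n x s (t * c))).
    { simpl. apply lag_cmp; try lia; try tauto. rewrite <- mult_IZR. apply IZR_le.
      apply gcd_up; auto. }
    apply lub_upper. exists s, (t * c)%Z. split; [lia|]. split; auto.
    rewrite mult_IZR; auto.
  - apply glb_greatest. intros y [de [Hde ->]]. apply le_of_approx. intros r' Hr'.
    assert (Hdc' : 0 < de / IZR c) by (apply Rdiv_lt_0_compat; auto).
    destruct (Pg0 _ Hdc' r' Hr') as [s [t [Ht [Hg [Hdist Hlt]]]]].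
    rewrite <- Hdc in Hg.
    destruct (gcd_low M N c d t Hc HM Hd HdM Hg) as [t'' [Et Hle]].
    subst t. assert (Ht'' : (0 < t'')%Z) by nia.
    assert (HT : IZR t'' <> 0) by (apply not_0_IZR; lia).
    rewrite mult_IZR in Hdist.
    apply Rbar_le_trans with (Finite (lag_term m (IZR c * x) s t'')).
    { simpl. left. eapply Rlt_le_trans; [exact Hlt|]. apply lag_cmp2; try lia; try tauto.
      rewrite <- mult_IZR. apply IZR_le. auto. }
    apply lub_upper. exists s, t''. split; auto. split; auto.
    rewrite (dist_id _ _ _ _ HT HC). destruct Hdist as [Hd1 Hd2]. split.
    + apply Rmult_lt_0_compat; auto.
    + assert (Hq : IZR c * Rabs (IZR s / (IZR t'' * IZR c) - x) < IZR c * (de / IZR c))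
        by (apply Rmult_lt_compat_l; auto).
      replace (IZR c * (de / IZR c)) with de in Hq by (field; lra). exact Hq.
Qed.
Lemma M_incl (m n : nat) : (0 < m)%nat -> (0 < n)%nat -> Nat.divide m n ->
  forall r, Mspec n r -> Mspec m r.
Proof.
  intros Hm Hn Hmn r [x [x' [Hne Hl]]].
  set (N := Z.of_nat n). set (M := Z.of_nat m).
  assert (HN : (0 < N)%Z) by (unfold N; lia).
  assert (HM : (0 < M)%Z) by (unfold M; lia).
  assert (HMN : (M | N)%Z) by (apply natdiv_Z; auto).
  assert (Hn' : forall r', r' < r -> exists s t, (s <> 0%Z \/ t <> 0%Z) /\
      Rbar_lt (Finite r') (mark_term n x x' s t)).
  { intros r' Hr'. apply NNPP; intro Hc.
    assert (H2 : Rbar_le (mu_n n x x') (Finite r')).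
    { apply lub_least. intros y [s [t [Hst ->]]].
      apply Rbar_not_lt_le; intro. apply Hc; eauto. }
    rewrite Hl in H2. simpl in H2. lra. }
  set (W := fun g (d : R) r' => exists s t, (s <> 0%Z \/ t <> 0%Z) /\ Z.gcd t N = g /\
      Rbar_lt (Finite r') (mark_term n x x' s t)).
  destruct (pick_g N r W) as [g0 [Hg0 Pg0]].
  { intros g d r' d2 r2 [s [t [H1 [H2 H3]]]] Hd Hr. exists s, t. repeat split; auto.
    eapply Rbar_le_lt_trans; [|exact H3]. simpl; auto. }
  { intros d Hd r' Hr'. destruct (Hn' r' Hr') as [s [t [Ht Hl']]].
    exists (Z.gcd t N). split; [apply gcd_range; auto|]. exists s, t; auto. }
  assert (Hg0n : (g0 | N)%Z).
  { destruct (Pg0 1 Rlt_0_1 (r - 1) ltac:(lra)) as [s [t [_ [Hg _]]]]. rewrite <- Hg.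
    apply Z.gcd_divide_r. }
  destruct (setup M N g0 HM HN HMN ltac:(lia) Hg0n) as [c [d [Hc [Hd [HdM [Hdc HMc]]]]]].
  assert (HC : 0 < IZR c) by (apply IZR_lt; lia).
  exists (IZR c * x), (IZR c * x'). split.
  { intro E. apply Hne. apply Rmult_eq_reg_l with (IZR c); auto. lra. }
  apply Rbar_le_antisym.
  - rewrite <- Hl. apply lub_least. intros y [s [t [Hst ->]]].
    apply Rbar_le_trans with (mark_term n x x' s (t * c)).
    { apply mark_cmp; auto. rewrite <- mult_IZR. apply IZR_le. apply gcd_up; auto. }
    apply lub_upper. exists s, (t * c)%Z. split; auto. destruct Hst; [left; auto|right; nia].
  - apply le_of_approx. intros r' Hr'.
    destruct (Pg0 _ Rlt_0_1 r' Hr') as [s [t [Hst [Hg Hlt]]]].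
    rewrite <- Hdc in Hg.
    destruct (gcd_low M N c d t Hc HM Hd HdM Hg) as [t'' [Et Hle]].
    subst t.
    apply Rbar_lt_le. eapply Rbar_lt_le_trans; [exact Hlt|].
    apply Rbar_le_trans with (mark_term m (IZR c * x) (IZR c * x') s t'').
    { apply mark_cmp2; auto. rewrite <- mult_IZR. apply IZR_le. auto. }
    apply lub_upper. exists s, t''. split; auto. destruct Hst; [left; auto|right; nia].
Qed.

Theorem corollary3p2 (m n : nat) :
  (0 < m)%nat -> (0 < n)%nat -> Nat.divide m n ->
  (forall r : R, Lspec n r -> Lspec m r) /\
  (forall r : R, Mspec n r -> Mspec m r) /\
  (forall r : R, Lspec n r -> Lspec 1 r) /\
  (forall r : R, Mspec n r -> Mspec 1 r).
Proof.
  intros Hm Hn Hmn. repeat split.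
  - apply L_incl; auto.
  - apply M_incl; auto.
  - apply L_incl; auto. apply Nat.divide_1_l.
  - apply M_incl; auto. apply Nat.divide_1_l.
Qed.
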